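(* Let $(M,\mathbf g,\nabla)$ be a Riemann–Cartan spacetime admitting a spin structure, fix a spin frame determining an orthonormal frame $\{\mathbf e_{\mathbf a}\}$ with dual coframe $\{\theta^{\mathbf a}\}$ and reciprocal coframe $\theta_{\mathbf a}=\eta_{\mathbf{ab}}\theta^{\mathbf b}$. For every $\psi\in\sec\mathcal C\ell^{(0)}(M,\mathtt g)$ and all $\mathbf a,\mathbf b$, $$[\nabla^{(s)}_{\mathbf e_{\mathbf a}},\nabla^{(s)}_{\mathbf e_{\mathbf b}}]\psi=\tfrac12\mathfrak R(\theta_{\mathbf a}\wedge\theta_{\mathbf b})\,\psi-\big(T^{\mathbf c}_{\mathbf{ab}}-\omega^{\mathbf c}_{\mathbf{ab}}+\omega^{\mathbf c}_{\mathbf{ba}}\big)\nabla^{(s)}_{\mathbf e_{\mathbf c}}\psi .$$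
   Context: A Riemann–Cartan spacetime: $4$-dimensional oriented, time-oriented manifold $M$ with Lorentzian metric $\mathbf g$ of signature $(1,3)$ and linear connection $\nabla$ with $\nabla\mathbf g=0$ and nonzero torsion. $\mathcal C\ell(M,\mathtt g)$ is the Clifford bundle of differential forms ($\theta^{\mathbf a}\theta^{\mathbf b}+\theta^{\mathbf b}\theta^{\mathbf a}=2\eta^{\mathbf{ab}}$, $\eta=\mathrm{diag}(1,-1,-1,-1)$), $\mathcal C\ell^{(0)}(M,\mathtt g)$ its even subbundle; $\nabla$ extends to $\mathcal C\ell(M,\mathtt g)$ as a derivation of the Clifford product. Notation: $\nabla_{\mathbf e_{\mathbf a}}\mathbf e_{\mathbf b}=\omega^{\mathbf c}_{\mathbf{ab}}\mathbf e_{\mathbf c}$ (equivalently $\nabla_{\mathbf e_{\mathbf a}}\theta^{\mathbf b}=-\omega^{\mathbf b}_{\mathbf{ac}}\theta^{\mathbf c}$), $[\mathbf e_{\mathbf a},\mathbf e_{\mathbf b}]=c^{\mathbf c}_{\mathbf{ab}}\mathbf e_{\mathbf c}$, torsion $T^{\mathbf c}_{\mathbf{ab}}=\omega^{\mathbf c}_{\mathbf{ab}}-\omega^{\mathbf c}_{\mathbf{ba}}-c^{\mathbf c}_{\mathbf{ab}}$. For a vector field $\mathbf v$, $\omega_{\mathbf v}$ is the $2$-form-valued connection form in the gauge $\{\theta^{\mathbf a}\}$: the section of $\bigwedge^2T^*M$ such that $\nabla_{\mathbf v}A=\partial_{\mathbf v}(A)+\frac12[\omega_{\mathbf v},A]$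 for every Clifford field $A=A^I\theta_I$, where $\partial_{\mathbf v}(A)=\mathbf v(A^I)\theta_I$ (derivative of components in the basis of multiforms $\theta_I$ generated by $\{\theta^{\mathbf a}\}$) and $[\cdot,\cdot]$ is the Clifford commutator. The effective spinorial covariant derivative is $\nabla^{(s)}_{\mathbf v}\psi=\nabla_{\mathbf v}\psi+\frac12\psi\,\omega_{\mathbf v}$. The biform-valued curvature is $\mathfrak R(u\wedge v)=\nabla_{\mathbf u}\omega_{\mathbf v}-\nabla_{\mathbf v}\omega_{\mathbf u}-\frac12[\omega_{\mathbf u},\omega_{\mathbf v}]-\omega_{[\mathbf u,\mathbf v]}$, where $u=\mathbf g(\mathbf u,\cdot)$, $v=\mathbf g(\mathbf v,\cdot)$ (so $\theta_{\mathbf a}$ corresponds to $\mathbf e_{\mathbf a}$) and $\nabla_{\mathbf u}\omega_{\mathbf v}$ is the covariant derivative of the Clifford field $\omega_{\mathbf v}$. *)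

(* Defs.v *)
(* Algebraic (frame-level) model of a Riemann-Cartan spacetime
   with a fixed orthonormal frame. *)
From HB Require Import structures.
From mathcomp Require Import all_boot all_order all_algebra.
Set Implicit Arguments. Unset Strict Implicit. Unset Printing Implicit Defensive.
Import Order.TTheory GRing.Theory Num.Theory.
Local Open Scope ring_scope.

Section Clifford.
Variable F : comUnitRingType.  (* stands for the ring C^oo(M) of smooth functions *)

Definition etaM (i : 'I_4) : F := if i == ord0 then 1 else -1.

(* Clifford fields: A = sum_I A^I theta_I, indexed by subsets I of {0,..,3};
   theta_I = theta^{i1} ... theta^{ik} (Clifford product, i1 < ... < ik). *)
Definition Cl := {ffun {set 'I_4} -> F}.

(* theta_S theta_T = bsign S T theta_{S symdiff T} *)
Definition bsign (S T : {set 'I_4}) : F :=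
  (-1) ^+ #|[set p : 'I_4 * 'I_4 | [&& p.1 \in S, p.2 \in T & (p.2 < p.1)%N]]|
  * \prod_(i in S :&: T) etaM i.

Definition symd (S T : {set 'I_4}) := (S :\: T) :|: (T :\: S).

Definition cmul (A B : Cl) : Cl :=
  [ffun U => \sum_(S : {set 'I_4}) \sum_(T : {set 'I_4} | symd S T == U)
               bsign S T * A S * B T].

Definition ccomm (A B : Cl) : Cl := cmul A B - cmul B A.

Definition blade (S : {set 'I_4}) : Cl := [ffun U => (U == S)%:R].
Definition theta (a : 'I_4) : Cl := blade [set a].
Definition theta_low (a : 'I_4) : Cl := [ffun U => etaM a * theta a U].

Definition cscale (f : F) (A : Cl) : Cl := [ffun U => f * A U].

Definition is_kform (k : nat) (A : Cl) := forall S : {set 'I_4}, #|S| != k -> A S = 0.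
Definition is_even (A : Cl) := forall S : {set 'I_4}, odd #|S| -> A S = 0.

(* frame data: d a = derivative along e_a; w c a b = omega^c_{ab};
   cc c a b = c^c_{ab} (structure functions [e_a,e_b] = c^c_{ab} e_c) *)
Variable d : 'I_4 -> F -> F.
Variable w : 'I_4 -> 'I_4 -> 'I_4 -> F.
Variable cc : 'I_4 -> 'I_4 -> 'I_4 -> F.

Definition torsion (c a b : 'I_4) : F := w c a b - w c b a - cc c a b.

Definition dC (a : 'I_4) (A : Cl) : Cl := [ffun U => d a (A U)].

Definition nabla_theta (a b : 'I_4) : Cl := - \sum_(c < 4) cscale (w b a c) (theta c).

(* nabla_{e_a} theta_S, extending nabla as a derivation of the Clifford product *)
Definition nabla_blade (a : 'I_4) (S : {set 'I_4}) : Cl :=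
  let s := enum S in
  \sum_(j < size s)
     \big[cmul/blade set0]_(k <- iota 0 (size s))
        (if k == (j : nat) then nabla_theta a (nth ord0 s k) else theta (nth ord0 s k)).

Definition nablaC (a : 'I_4) (A : Cl) : Cl :=
  dC a A + \sum_(S : {set 'I_4}) cscale (A S) (nabla_blade a S).

Variable Om : 'I_4 -> Cl.

Definition halfF : F := (2%:R)^-1.

Definition nablaS (a : 'I_4) (psi : Cl) : Cl :=
  nablaC a psi + cscale halfF (cmul psi (Om a)).

(* biform-valued curvature R(theta_a /\ theta_b), using
   omega_{[e_a,e_b]} = c^c_{ab} omega_{e_c} *)
Definition curv (a b : 'I_4) : Cl :=
  nablaC a (Om b) - nablaC b (Om a) - cscale halfF (ccomm (Om a) (Om b))
  - \sum_(c < 4) cscale (cc c a b) (Om c).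

End Clifford.

(* Main.v *)
Require Import Defs.
From HB Require Import structures.
From mathcomp Require Import all_boot all_order all_algebra.
From mathcomp Require Import ring.
Import GRing.Theory.
Local Open Scope ring_scope.

Lemma in_symd (S T : {set 'I_4}) i : (i \in symd S T) = ((i \in S) != (i \in T)).
Proof. by rewrite /symd !inE; case: (i \in S); case: (i \in T). Qed.

Lemma symdA S T W : symd (symd S T) W = symd S (symd T W).
Proof. by apply/setP => i; rewrite !in_symd; case: (i \in S); case: (i \in T); case: (i \in W). Qed.

Lemma etaM2 (F : comUnitRingType) i : etaM F i * etaM F i = 1.
Proof. by rewrite /etaM; case: ifP => _; rewrite ?mulr1 ?mulrNN ?mulr1. Qed.

Lemma bsignE (F : comUnitRingType) S T : bsign F S T =
  (\prod_(p : 'I_4 * 'I_4) (-1) ^+ nat_of_bool [&& p.1 \in S, p.2 \in T & (p.2 < p.1)%N])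
  * \prod_(i : 'I_4) (if (i \in S) && (i \in T) then etaM F i else 1).
Proof.
rewrite /bsign prodrXr; congr (_ ^+ _ * _).
  rewrite cardsE -sum1_card big_mkcond /=; apply: eq_bigr => p _; rewrite unfold_in /=.
  by case: [&& _, _ & _].
by rewrite big_mkcond /=; apply: eq_bigr => i _; rewrite !inE.
Qed.

Lemma bsign_cocycle (F : comUnitRingType) S T W :
  bsign F S T * bsign F (symd S T) W = bsign F S (symd T W) * bsign F T W.
Proof.
rewrite !bsignE mulrACA [RHS]mulrACA -!big_split /=; congr (_ * _).
  apply: eq_bigr => p _; rewrite !in_symd.
  case: (p.1 \in S); case: (p.1 \in T); case: (p.2 \in T); case: (p.2 \in W);
  case: (p.2 < p.1)%N; by rewrite /= ?expr0 ?expr1 ?mulrNN ?mulr1 ?mul1r.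
apply: eq_bigr => i _; rewrite !in_symd.
case: (i \in S); case: (i \in T); case: (i \in W);
  by rewrite /= ?mulr1 ?mul1r ?etaM2 // mulrC.
Qed.
Lemma D0 {F : comUnitRingType} {D : F -> F} (HA : forall f g, D (f + g) = D f + D g) :
  D 0 = 0.
Proof. have h := HA 0 0; rewrite addr0 in h. by apply: (addrI (D 0)); rewrite addr0 -h. Qed.

Lemma D1 {F : comUnitRingType} {D : F -> F} (HL : forall f g, D (f * g) = D f * g + f * D g) :
  D 1 = 0.
Proof. have h := HL 1 1; rewrite !mulr1 mul1r in h. by apply: (addrI (D 1)); rewrite addr0 -h. Qed.

Lemma DN {F : comUnitRingType} {D : F -> F} (HA : forall f g, D (f + g) = D f + D g) x :
  D (- x) = - D x.
Proof. by apply/eqP; rewrite -subr_eq0 opprK -HA addNr (D0 HA). Qed.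

Lemma DB {F : comUnitRingType} {D : F -> F} (HA : forall f g, D (f + g) = D f + D g) x y :
  D (x - y) = D x - D y.
Proof. by rewrite HA (DN HA). Qed.

Lemma Dsum {F : comUnitRingType} {D : F -> F} (HA : forall f g, D (f + g) = D f + D g)
  I (r : seq I) (P : pred I) (f : I -> F) :
  D (\sum_(i <- r | P i) f i) = \sum_(i <- r | P i) D (f i).
Proof. exact: (big_morph D HA (D0 HA)). Qed.

Lemma Dbsign {F : comUnitRingType} {D : F -> F} (HA : forall f g, D (f + g) = D f + D g)
  (HL : forall f g, D (f * g) = D f * g + f * D g) S T : D (bsign F S T) = 0.
Proof.
have Dm1 : D (-1) = 0 by rewrite (DN HA) (D1 HL) oppr0.
have DX : forall x n, D x = 0 -> D (x ^+ n) = 0.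
  move=> x n Dx; elim: n => [|n IH]; first by rewrite expr0 (D1 HL).
  by rewrite exprS HL Dx IH mul0r mulr0 addr0.
rewrite /bsign HL DX // mul0r add0r.
have -> : D (\prod_(i in S :&: T) etaM F i) = 0; last by rewrite mulr0.
apply: (big_ind (fun x => D x = 0)); first exact: (D1 HL).
  by move=> x y Dx Dy; rewrite HL Dx Dy mul0r mulr0 addr0.
by move=> i _; rewrite /etaM; case: ifP => _; [exact: (D1 HL) | exact: Dm1].
Qed.

Lemma Dhalf {F : comUnitRingType} {D : F -> F} (HA : forall f g, D (f + g) = D f + D g)
  (HL : forall f g, D (f * g) = D f * g + f * D g) (H2 : (2%:R : F) \is a GRing.unit) :
  D (halfF F) = 0.
Proof.
have D2 : D 2%:R = 0 by rewrite mulr2n HA (D1 HL) addr0.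
apply: (mulrI H2); rewrite mulr0.
have := HL 2%:R (halfF F); rewrite /halfF mulrV // (D1 HL) D2 mul0r add0r.
by move=> <-.
Qed.

Lemma cscaleDr (F : comUnitRingType) f (A B : Cl F) : cscale f (A + B) = cscale f A + cscale f B.
Proof. by apply/ffunP => U; rewrite !ffunE mulrDr. Qed.
Lemma cscaleBr (F : comUnitRingType) f (A B : Cl F) : cscale f (A - B) = cscale f A - cscale f B.
Proof. by apply/ffunP => U; rewrite !ffunE mulrBr. Qed.
Lemma cscale0 (F : comUnitRingType) (A : Cl F) : cscale 0 A = 0.
Proof. by apply/ffunP => U; rewrite !ffunE mul0r. Qed.
Lemma cscaleA (F : comUnitRingType) f g (A : Cl F) : cscale f (cscale g A) = cscale (f * g) A.
Proof. by apply/ffunP => U; rewrite !ffunE mulrA. Qed.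

Lemma cmulE (F : comUnitRingType) (A B : Cl F) U : cmul A B U =
  \sum_(S : {set 'I_4}) \sum_(T : {set 'I_4} | symd S T == U) bsign F S T * A S * B T.
Proof. by rewrite ffunE. Qed.

Lemma cmulDl (F : comUnitRingType) (A B C : Cl F) : cmul (A + B) C = cmul A C + cmul B C.
Proof.
apply/ffunP => U; rewrite !ffunE -big_split; apply: eq_bigr => S _.
by rewrite -big_split; apply: eq_bigr => T _; rewrite ?ffunE mulrDr mulrDl.
Qed.
Lemma cmulDr (F : comUnitRingType) (A B C : Cl F) : cmul A (B + C) = cmul A B + cmul A C.
Proof.
apply/ffunP => U; rewrite !ffunE -big_split; apply: eq_bigr => S _.
by rewrite -big_split; apply: eq_bigr => T _; rewrite ?ffunE mulrDr.
Qed.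
Lemma cmulBl (F : comUnitRingType) (A B C : Cl F) : cmul (A - B) C = cmul A C - cmul B C.
Proof.
apply/ffunP => U; rewrite !ffunE -sumrB; apply: eq_bigr => S _.
by rewrite -sumrB; apply: eq_bigr => T _; rewrite ?ffunE; ring.
Qed.
Lemma cmulBr (F : comUnitRingType) (A B C : Cl F) : cmul A (B - C) = cmul A B - cmul A C.
Proof.
apply/ffunP => U; rewrite !ffunE -sumrB; apply: eq_bigr => S _.
by rewrite -sumrB; apply: eq_bigr => T _; rewrite ?ffunE; ring.
Qed.
Lemma cmul0l (F : comUnitRingType) (B : Cl F) : cmul 0 B = 0.
Proof.
apply/ffunP => U; rewrite !ffunE big1 // => S _; rewrite big1 // => T _.
by rewrite ffunE mulr0 mul0r.
Qed.
Lemma cmul_scalel (F : comUnitRingType) f (A B : Cl F) : cmul (cscale f A) B = cscale f (cmul A B).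
Proof.
apply/ffunP => U; rewrite !ffunE mulr_sumr; apply: eq_bigr => S _.
by rewrite mulr_sumr; apply: eq_bigr => T _; rewrite ?ffunE; ring.
Qed.
Lemma cmul_scaler (F : comUnitRingType) f (A B : Cl F) : cmul A (cscale f B) = cscale f (cmul A B).
Proof.
apply/ffunP => U; rewrite !ffunE mulr_sumr; apply: eq_bigr => S _.
by rewrite mulr_sumr; apply: eq_bigr => T _; rewrite ?ffunE; ring.
Qed.
Lemma cmul_suml (F : comUnitRingType) (A : 'I_4 -> Cl F) (B : Cl F) :
  cmul (\sum_(c < 4) A c) B = \sum_(c < 4) cmul (A c) B.
Proof. by apply: (big_morph (fun X => cmul X B)); [move=> X Y; exact: cmulDl | exact: cmul0l]. Qed.

Lemma dC_cmul (F : comUnitRingType) (D : 'I_4 -> F -> F) a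
  (HA : forall f g, D a (f + g) = D a f + D a g)
  (HL : forall f g, D a (f * g) = D a f * g + f * D a g) (A B : Cl F) :
  dC D a (cmul A B) = cmul (dC D a A) B + cmul A (dC D a B).
Proof.
apply/ffunP => U; rewrite !ffunE (Dsum HA) -big_split; apply: eq_bigr => S _.
rewrite (Dsum HA) -big_split; apply: eq_bigr => T _.
by rewrite !ffunE HL HL (Dbsign HA HL) mul0r add0r.
Qed.
Lemma dCD (F : comUnitRingType) (D : 'I_4 -> F -> F) a
  (HA : forall f g, D a (f + g) = D a f + D a g) (A B : Cl F) :
  dC D a (A + B) = dC D a A + dC D a B.
Proof. by apply/ffunP => U; rewrite !ffunE HA. Qed.
Lemma dCB (F : comUnitRingType) (D : 'I_4 -> F -> F) a
  (HA : forall f g, D a (f + g) = D a f + D a g) (A B : Cl F) :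
  dC D a (A - B) = dC D a A - dC D a B.
Proof. by apply/ffunP => U; rewrite !ffunE (DB HA). Qed.
Lemma dC_scale (F : comUnitRingType) (D : 'I_4 -> F -> F) a
  (HL : forall f g, D a (f * g) = D a f * g + f * D a g) f (A : Cl F) :
  dC D a (cscale f A) = cscale (D a f) A + cscale f (dC D a A).
Proof. by apply/ffunP => U; rewrite !ffunE HL. Qed.

Lemma collapse (F : comUnitRingType) (I : finType) (i0 : I) (p : pred I) (g : F) :
  \sum_(x : I) (if p x then (if i0 == x then g else 0) else 0) = if p i0 then g else 0.
Proof.
rewrite (bigD1 i0) //= eqxx big1 ?addr0 //.
by move=> x /negbTE nx; rewrite eq_sym nx; case: (p x).
Qed.

Lemma cmulA_l (F : comUnitRingType) (A B C : Cl F) U :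
  cmul (cmul A B) C U = \sum_S \sum_T \sum_W
    (if symd (symd S T) W == U then
       bsign F S T * bsign F (symd S T) W * A S * B T * C W else 0).
Proof.
rewrite ffunE.
transitivity (\sum_(X : {set 'I_4}) \sum_(W : {set 'I_4}) \sum_(S : {set 'I_4}) \sum_(T : {set 'I_4})
  (if symd X W == U then (if symd S T == X then
       bsign F S T * bsign F (symd S T) W * A S * B T * C W else 0) else 0)).
  apply: eq_bigr => X _; rewrite big_mkcond; apply: eq_bigr => W _.
  case: (symd X W == U); last by rewrite big1 // => S _; rewrite big1.
  rewrite ffunE mulr_sumr mulr_suml; apply: eq_bigr => S _.
  rewrite big_mkcond mulr_sumr mulr_suml; apply: eq_bigr => T _.
  by case: (symd S T =P X) => [<-|_]; [ring | rewrite mulr0 mul0r].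
rewrite exchange_big.
under eq_bigr => W _ do rewrite exchange_big.
under eq_bigr => W _ do under eq_bigr => S _ do rewrite exchange_big.
rewrite exchange_big.
under eq_bigr => S _ do rewrite exchange_big.
apply: eq_bigr => S _; apply: eq_bigr => T _; apply: eq_bigr => W _.
by rewrite (@collapse _ _ (symd S T) (fun X => symd X W == U)).
Qed.

Lemma cmulA_r (F : comUnitRingType) (A B C : Cl F) U :
  cmul A (cmul B C) U = \sum_S \sum_T \sum_W
    (if symd S (symd T W) == U then
       bsign F S (symd T W) * bsign F T W * A S * B T * C W else 0).
Proof.
rewrite ffunE.
transitivity (\sum_(S : {set 'I_4}) \sum_(V : {set 'I_4}) \sum_(T : {set 'I_4}) \sum_(W : {set 'I_4})
  (if symd S V == U then (if symd T W == V then
       bsign F S (symd T W) * bsign F T W * A S * B T * C W else 0) else 0)).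
  apply: eq_bigr => S _; rewrite big_mkcond; apply: eq_bigr => V _.
  case: (symd S V == U); last by rewrite big1 // => T _; rewrite big1.
  rewrite ffunE mulr_sumr; apply: eq_bigr => T _.
  rewrite big_mkcond mulr_sumr; apply: eq_bigr => W _.
  by case: (symd T W =P V) => [<-|_]; [ring | rewrite mulr0].
apply: eq_bigr => S _.
rewrite exchange_big.
under eq_bigr => T _ do rewrite exchange_big.
apply: eq_bigr => T _; apply: eq_bigr => W _.
by rewrite (@collapse _ _ (symd T W) (fun V => symd S V == U)).
Qed.

Lemma cmulA (F : comUnitRingType) (A B C : Cl F) :
  cmul (cmul A B) C = cmul A (cmul B C).
Proof.
apply/ffunP => U; rewrite cmulA_l cmulA_r.
apply: eq_bigr => S _; apply: eq_bigr => T _; apply: eq_bigr => W _.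
rewrite symdA; case: ifP => // _.
by rewrite bsign_cocycle; ring.
Qed.

Lemma cscale_sum (F : comUnitRingType) f (A : 'I_4 -> Cl F) :
  cscale f (\sum_(c < 4) A c) = \sum_(c < 4) cscale f (A c).
Proof. by apply/ffunP => U; rewrite ffunE !sum_ffunE mulr_sumr; apply: eq_bigr => c _; rewrite ffunE. Qed.

Lemma cmul_suml_scale (F : comUnitRingType) (f : 'I_4 -> F) (A : 'I_4 -> Cl F) (B : Cl F) :
  cmul (\sum_(c < 4) cscale (f c) (A c)) B = \sum_(c < 4) cscale (f c) (cmul (A c) B).
Proof. by rewrite cmul_suml; apply: eq_bigr => c _; rewrite cmul_scalel. Qed.

Theorem mainTheorem7
  (F : comUnitRingType)
  (d : 'I_4 -> F -> F)                    (* e_a acting on functions *)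
  (cc w : 'I_4 -> 'I_4 -> 'I_4 -> F)     (* c^c_{ab}, omega^c_{ab} *)
  (Om : 'I_4 -> Cl F)                     (* omega_{e_a} *)
  (H2 : (2%:R : F) \is a GRing.unit)
  (Hadd : forall a f g, d a (f + g) = d a f + d a g)
  (Hleib : forall a f g, d a (f * g) = d a f * g + f * d a g)
  (Hbr : forall a b f, d a (d b f) - d b (d a f) = \sum_(c < 4) cc c a b * d c f)
  (Hmet : forall a b c, etaM F c * w c a b = - (etaM F b * w b a c))
  (Htors : exists a b c, torsion w cc c a b != 0)
  (HOm2 : forall a, is_kform 2 (Om a))
  (HOm : forall a (A : Cl F),
           nablaC d w a A = dC d a A + cscale (@halfF F) (ccomm (Om a) A)) :
  forall psi : Cl F, is_even psi -> forall a b : 'I_4,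
    nablaS d w Om a (nablaS d w Om b psi) - nablaS d w Om b (nablaS d w Om a psi)
    = cscale (@halfF F) (cmul (curv d w cc Om a b) psi)
      - \sum_(c < 4) cscale (torsion w cc c a b - w c a b + w c b a) (nablaS d w Om c psi).
Proof.
move=> psi _ a b.
have HS : forall e Y, nablaS d w Om e Y = dC d e Y + cscale (halfF F) (cmul (Om e) Y).
  move=> e Y; rewrite /nablaS HOm /ccomm cscaleBr -addrA.
  by rewrite subrK.
have Dh : forall e, d e (halfF F) = 0 by move=> e; exact: (Dhalf (Hadd e) (Hleib e) H2).
have dCD' : forall e (A B : Cl F), dC d e (A + B) = dC d e A + dC d e B.
  by move=> e; apply: dCD; apply: Hadd.
have dCm' : forall e (A B : Cl F), dC d e (cmul A B) = cmul (dC d e A) B + cmul A (dC d e B).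
  by move=> e; apply: dC_cmul; [apply: Hadd | apply: Hleib].
have dCs' : forall e f (A : Cl F), dC d e (cscale f A) = cscale (d e f) A + cscale f (dC d e A).
  by move=> e; apply: dC_scale; apply: Hleib.
have E1 : dC d a (dC d b psi) = \sum_(c < 4) cscale (cc c a b) (dC d c psi) + dC d b (dC d a psi).
  apply/ffunP => U; rewrite !ffunE sum_ffunE.
  have := Hbr a b (psi U); move/eqP; rewrite subr_eq => /eqP ->.
  congr (_ + _); apply: eq_bigr => c _; by rewrite !ffunE.
have E2 : \sum_(c < 4) cscale (torsion w cc c a b - w c a b + w c b a) (nablaS d w Om c psi)
   = - (\sum_(c < 4) cscale (cc c a b) (dC d c psi))
     - cscale (halfF F) (\sum_(c < 4) cscale (cc c a b) (cmul (Om c) psi)).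
  rewrite cscale_sum -sumrN -sumrB; apply: eq_bigr => c _.
  rewrite HS; move: (dC d c psi) (cmul (Om c) psi) => X Y.
  by apply/ffunP => U; rewrite !ffunE /torsion; ring.
rewrite E2 !HS /curv !HOm /ccomm.
rewrite !dCD' !dCs' !dCm' !Dh !cscale0 !add0r !cmulDr !cmul_scaler -!cmulA E1.
rewrite !cmulBl !cmulDl !cmul_scalel !cmulBl cmul_suml_scale.
move: (\sum_(c < 4) cscale (cc c a b) (dC d c psi)) => S1.
move: (\sum_(c < 4) cscale (cc c a b) (cmul (Om c) psi)) => S2.
move: (dC d b (dC d a psi)) => X.
move: (cmul (cmul (Om a) (Om b)) psi) (cmul (cmul (Om b) (Om a)) psi) => Pab Pba.
move: (cmul (dC d a (Om b)) psi) (cmul (dC d b (Om a)) psi) => Qab Qba.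
move: (cmul (Om a) (dC d b psi)) (cmul (Om b) (dC d a psi)) => Rab Rba.
by apply/ffunP => U; rewrite !ffunE; ring.
Qed.
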